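(* Let $s$ be a positive integer and let $a_0\ge a_1\ge\cdots\ge a_t\ge1$ be integers with $\sum_{i=0}^t a_i=s^2$. Let $$g=2\sum_{i=0}^t\sqrt{a_i}-2s.$$ Then $g\ge 2t\big(1-\frac1s\big)$. Moreover, if $a_0\ge a_1\ge 36$, then $g\ge 2t\big(1-\frac1s\big)+4$. *)

(* Defs.v *)
From Stdlib Require Import Reals Lra Lia.

(* Main.v *)
Require Import Defs.
From Stdlib Require Import Reals Lra Lia.
Open Scope R_scope.

Lemma hbound (x s : R) : 1 <= x -> x <= s ->
  x - 1 - (x*x - 1)/(s+1) = (x-1)*(s-x)/(s+1).
Proof. intros. field. lra. Qed.

Lemma hnonneg (A s : R) : 1 <= A -> A <= s^2 -> 0 <= s ->
  0 <= sqrt A - 1 - (A - 1)/(s+1).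
Proof.
  intros H1 H2 Hs.
  assert (Hx0 := sqrt_pos A). assert (Hxx := sqrt_sqrt A ltac:(lra)).
  set (x := sqrt A) in *.
  assert (1 <= x) by nra. assert (x <= s) by nra.
  rewrite <- Hxx, hbound by lra.
  apply Rmult_le_pos; [nra| left; apply Rinv_0_lt_compat; lra].
Qed.

Theorem lemma4p3 (s t : nat) (a : nat -> nat)
  (hs : (1 <= s)%nat)
  (hmono : forall i, (i < t)%nat -> (a (S i) <= a i)%nat)
  (hpos : forall i, (i <= t)%nat -> (1 <= a i)%nat)
  (hsum : sum_f_R0 (fun i => INR (a i)) t = INR s ^ 2) :
  let g := 2 * sum_f_R0 (fun i => sqrt (INR (a i))) t - 2 * INR s in
  g >= 2 * INR t * (1 - 1 / INR s) /\
  ((1 <= t)%nat -> (36 <= a 1%nat)%nat ->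
     g >= 2 * INR t * (1 - 1 / INR s) + 4).
Proof.
  intro g.
  assert (HS : 1 <= INR s) by (apply (le_INR 1); lia).
  set (SA := fun n => sum_f_R0 (fun i => INR (a i)) n).
  set (SQ := fun n => sum_f_R0 (fun i => sqrt (INR (a i))) n).
  set (D := fun n => SQ n - INR (S n) - (SA n - INR (S n)) / (INR s + 1)).
  assert (HSAm : forall m k, (m + k <= t)%nat -> SA m <= SA (m + k)%nat).
  { intros m k; induction k as [|k IH]; intros Hk.
    - rewrite Nat.add_0_r; lra.
    - rewrite Nat.add_succ_r. unfold SA at 2; simpl sum_f_R0; fold (SA (m+k)%nat).
      assert (H := IH ltac:(lia)). assert (H2 := pos_INR (a (S (m+k)))). lra. }
  assert (Hai : forall i, (i <= t)%nat -> INR (a i) <= INR s ^ 2).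
  { intros i Hi. rewrite <- hsum. fold (SA t).
    apply Rle_trans with (SA i).
    - destruct i; unfold SA; simpl; [lra|].
      assert (H := pos_INR (a (S i))).
      assert (0 <= sum_f_R0 (fun i0 => INR (a i0)) i).
      { apply cond_pos_sum. intro; apply pos_INR. } lra.
    - assert (HH := HSAm i (t-i)%nat ltac:(lia)). replace (i + (t-i))%nat with t in HH by lia. exact HH. }
  assert (Hh : forall i, (i <= t)%nat -> 0 <= sqrt (INR (a i)) - 1 - (INR (a i) - 1)/(INR s + 1)).
  { intros i Hi. apply hnonneg; [apply (le_INR 1); auto | auto | lra]. }
  assert (HDstep : forall n, D (S n) = D n + (sqrt (INR (a (S n))) - 1 - (INR (a (S n)) - 1)/(INR s + 1))).
  { intro n. unfold D, SQ, SA. simpl sum_f_R0. rewrite (S_INR (S n)). field. lra. }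
  assert (HDm : forall m k, (m + k <= t)%nat -> D m <= D (m + k)%nat).
  { intros m k; induction k as [|k IH]; intros Hk.
    - rewrite Nat.add_0_r; lra.
    - rewrite Nat.add_succ_r, HDstep.
      assert (H := IH ltac:(lia)). assert (H2 := Hh (S (m+k)) ltac:(lia)). lra. }
  assert (HDt : D 0%nat <= D t) by (apply (HDm 0%nat t); lia).
  assert (HD0 : 0 <= D 0%nat).
  { unfold D, SQ, SA; simpl. replace (INR 1) with 1 by reflexivity.
    apply (Hh 0%nat); lia. }
  assert (Hg : g = 2 * D t + 2 * INR t * INR s / (INR s + 1)).
  { unfold g, D. fold (SQ t). fold (SA t) in hsum. rewrite hsum, S_INR. field. lra. }
  assert (Hkey : INR t * INR s / (INR s + 1) - INR t * (1 - 1 / INR s)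
                 = INR t / (INR s * (INR s + 1))).
  { field. lra. }
  assert (Hpos2 : 0 <= INR t / (INR s * (INR s + 1))).
  { apply Rmult_le_pos; [apply pos_INR| left; apply Rinv_0_lt_compat; nra]. }
  split.
  - rewrite Hg. lra.
  - intros Ht H36.
    assert (HD1 : D 1%nat <= D t) by (assert (HH := HDm 1%nat (t-1)%nat ltac:(lia)); replace (1 + (t-1))%nat with t in HH by lia; exact HH).
    assert (H2 : D 1%nat >= 2).
    { unfold D, SQ, SA. simpl sum_f_R0.
      assert (Ha10 := hmono 0%nat ltac:(lia)).
      assert (HA1 : 36 <= INR (a 1%nat)) by (apply (le_INR 36) in H36; simpl in H36; lra).
      assert (HA0 : INR (a 1%nat) <= INR (a 0%nat)) by (apply le_INR; auto).
      assert (Hsum01 : INR (a 0%nat) + INR (a 1%nat) <= INR s ^ 2).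
      { rewrite <- hsum. fold (SA t). apply Rle_trans with (SA 1%nat).
        - unfold SA; simpl; lra.
        - assert (HH := HSAm 1%nat (t-1)%nat ltac:(lia)); replace (1 + (t-1))%nat with t in HH by lia; exact HH. }
      assert (Hu0 := sqrt_pos (INR (a 0%nat))).
      assert (Huu := sqrt_sqrt (INR (a 0%nat)) ltac:(lra)).
      assert (Hv0 := sqrt_pos (INR (a 1%nat))).
      assert (Hvv := sqrt_sqrt (INR (a 1%nat)) ltac:(lra)).
      set (u := sqrt (INR (a 0%nat))) in *.
      set (v := sqrt (INR (a 1%nat))) in *.
      rewrite <- Huu, <- Hvv in *.
      assert (Hv6 : 6 <= v) by nra.
      assert (Hvu : v <= u) by nra.
      assert (Hs8 : 8 <= INR s) by nra.
      replace (INR (S 1)) with 2 by (simpl; lra).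
      set (S0 := INR s) in *.
      assert (Hq : u*u + v*v <= S0^2) by lra.
      assert (Hmain : (u-1)*(S0-u) + (v-1)*(S0-v) >= 2*(S0+1)).
      { set (p := u + v).
        assert (Huv : u*v >= 6*p - 36) by (unfold p; nra).
        assert (Eh : (u-1)*(S0-u) + (v-1)*(S0-v) = (S0+1)*p - (u*u+v*v) - 2*S0)
          by (unfold p; ring).
        rewrite Eh.
        destruct (Rle_lt_dec (S0+3) p) as [Hp|Hp].
        - nra.
        - assert (Hq2 : u*u+v*v = p*p - 2*(u*v)) by (unfold p; ring).
          assert (12 <= p) by (unfold p; lra).
          nra. }
      assert (Hfr : ((u-1)*(S0-u)+(v-1)*(S0-v))/(S0+1) >= 2).
      { apply Rle_ge. apply Rle_trans with (2*(S0+1)/(S0+1)).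
        + right; field; lra.
        + apply Rmult_le_compat_r; [left; apply Rinv_0_lt_compat; lra| lra]. }
      match goal with |- ?L >= _ => replace L with (((u-1)*(S0-u)+(v-1)*(S0-v))/(S0+1)) by (field; lra) end.
      exact Hfr. }
    rewrite Hg. lra.
Qed.
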